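(* Let $M$ be a real symmetric $n \times n$ matrix whose diagonal entries are all $0$ and whose off-diagonal entries each lie in $\{0, 1, -1\}$. Let $e$ be an eigenvalue of $M$ of multiplicity at least $m$, where $m \ge 1$. Then $e^2 \le (n-1)(n-m)/m$. *)

(* Defs.v *)
From mathcomp Require Import all_boot all_order all_algebra.
From mathcomp Require Import reals.
Set Implicit Arguments. Unset Strict Implicit. Unset Printing Implicit Defensive.
Import Order.TTheory GRing.Theory Num.Theory.
Local Open Scope ring_scope.

Definition signed_adj (R : pzRingType) (n : nat) (M : 'M[R]_n) : Prop :=
  (forall i, M i i = 0) /\
  (forall i j, i != j -> M i j = 0 \/ M i j = 1 \/ M i j = -1).

Definition eig_mult_ge (R : idomainType) (n : nat) (M : 'M[R]_n) (e : R) (m : nat) : Prop :=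
  (('X - e%:P) ^+ m %| char_poly M)%R.

(* Main.v *)
Require Import Defs.
From mathcomp Require Import all_boot all_order all_algebra.
From mathcomp Require Import reals.
From mathcomp Require Import complex.
Import Order.TTheory GRing.Theory Num.Theory.
Local Open Scope ring_scope.
Lemma char_poly_sim (F : fieldType) n (P Y : 'M[F]_n) : P \in unitmx ->
  char_poly (invmx P *m Y *m P) = char_poly Y.
Proof.
move=> Pu; rewrite /char_poly /char_poly_mx.
have E : map_mx polyC (invmx P) *m map_mx polyC P = 1%:M.
  by rewrite -map_mxM mulVmx // map_mx1.
rewrite !map_mxM.
have -> : ('X%:M : 'M[{poly F}]_n) - 
   map_mx polyC (invmx P) *m map_mx polyC Y *m map_mx polyC P =
   map_mx polyC (invmx P) *m ('X%:M - map_mx polyC Y) *m map_mx polyC P.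
  by rewrite mulmxBr mulmxBl scalar_mxC -(mulmxA 'X%:M) E mulmx1.
by rewrite !det_mulmx mulrAC -det_mulmx E det1 mul1r.
Qed.
Lemma mult_count (F : fieldType) n (d : 'I_n -> F) c m :
  ('X - c%:P) ^+ m %| \prod_i ('X - (d i)%:P) -> (m <= #|[set i | d i == c]|)%N.
Proof.
have nz : \prod_i ('X - (d i)%:P) != 0.
  by apply: monic_neq0; apply: monic_prod_XsubC.
rewrite -mup_geq //.
rewrite (bigID (fun i => d i == c)) /=.
rewrite mupMl; last first.
  rewrite /root horner_prod; apply/prodf_neq0 => i di.
  by rewrite hornerXsubC subr_eq0 eq_sym.
have -> : \prod_(i | d i == c) ('X - (d i)%:P) = ('X - c%:P) ^+ #|[set i | d i == c]|.
  rewrite (eq_bigr (fun=> 'X - c%:P)); last by move=> i /eqP ->.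
  by rewrite prodr_const; congr (_ ^+ _); apply: eq_card => i; rewrite inE.
by rewrite mup_XsubCX eqxx.
Qed.
Section Spec.
Variable R : realType.
Local Notation toC := (real_complex R).

Lemma spec n (M : 'M[R]_n) : M^T = M ->
  exists r : 'I_n -> R,
   [/\ map_poly toC (char_poly M) = \prod_(i < n) ('X - (toC (r i))%:P),
       \sum_i r i = \tr M & \sum_i r i ^+ 2 = \tr (M *m M)].
Proof.
move=> Msym.
pose A : 'M[R[i]]_n := map_mx toC M.
have Asym : A \is symmetricmx.
  apply/is_hermitianmxP; rewrite expr0 scale1r map_mx_id //.
  by rewrite /A map_trmx Msym.
have Areal : A \is a realmx.
  by apply/mxOverP => i j; rewrite mxE complex_real.
have Aherm := realsym_hermsym Asym Areal.
have /orthomx_spectralP AE := hermitian_normalmx Aherm.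
have Dreal := hermitian_spectral_diag_real Aherm.
set P := spectralmx A in AE; set D := spectral_diag A in AE Dreal.
have Pu : P \in unitmx := spectral_unit A.
exists (fun i => complex.Re (D 0 i)).
have rE i : toC (complex.Re (D 0 i)) = D 0 i.
  by apply: RRe_real; move/mxOverP: Dreal; apply.
have trsim (X : 'M_n) : \tr (invmx P *m X *m P) = \tr X.
  by rewrite mxtrace_mulC mulmxA mulmxV // mul1mx.
split.
- rewrite map_char_poly -/A AE char_poly_sim // char_poly_trig ?diag_mx_is_trig //.
  by apply: eq_bigr => i _; rewrite mxE eqxx mulr1n rE.
- apply: complexI; rewrite rmorph_sum /=.
  under eq_bigr do rewrite rE.
  rewrite -mxtrace_diag -(trsim (diag_mx D)) -AE /A.
  by rewrite /mxtrace rmorph_sum; apply: eq_bigr => i _; rewrite mxE.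
- apply: complexI; rewrite rmorph_sum /=.
  under eq_bigr do rewrite rmorphXn /= rE.
  have -> : \sum_i D 0 i ^+ 2 = \tr (diag_mx D *m diag_mx D).
    by rewrite mulmx_diag mxtrace_diag; apply: eq_bigr => i _; rewrite mxE expr2.
  rewrite -(trsim (diag_mx D *m diag_mx D)).
  have -> : invmx P *m (diag_mx D *m diag_mx D) *m P = A *m A.
    by rewrite AE -!mulmxA (mulmxA P (invmx P)) mulmxV // mul1mx.
  by rewrite /A -map_mxM /mxtrace rmorph_sum; apply: eq_bigr => i _; rewrite mxE.
Qed.
End Spec.

From mathcomp Require Import ring lra.

Lemma cs (R : realFieldType) (I : finType) (B : {set I}) (x : I -> R) :
  (\sum_(i in B) x i) ^+ 2 <= #|B|%:R * \sum_(i in B) x i ^+ 2.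
Proof.
set s := \sum_(i in B) x i; set q := \sum_(i in B) x i ^+ 2; set k : R := #|B|%:R.
have H : 0 <= \sum_(i in B) (k * x i - s) ^+ 2 by apply: sumr_ge0 => i _; apply: sqr_ge0.
have E : \sum_(i in B) (k * x i - s) ^+ 2 = k * (k * q - s ^+ 2).
  have -> : \sum_(i in B) (k * x i - s) ^+ 2 =
     \sum_(i in B) (k ^+ 2 * x i ^+ 2) - \sum_(i in B) ((2 * k * s) * x i) + \sum_(i in B) s ^+ 2.
    rewrite -sumrB -big_split /=; apply: eq_bigr => i _; ring.
  rewrite -!mulr_sumr sumr_const -/q -/s -/k mulr_natr; ring.
have [k0|kp] := eqVneq k 0.
  have -> : s = 0.
    rewrite /s big1 // => i iB; move/eqP: k0; rewrite /k pnatr_eq0 cards_eq0.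
    by move=> /eqP B0; rewrite B0 inE in iB.
  by rewrite expr0n /= k0 mul0r.
have k0' : 0 < k by rewrite lt0r kp ler0n.
rewrite E in H; rewrite pmulr_rge0 // subr_ge0 in H.
done.
Qed.

Lemma final (R : realFieldType) n m (r : 'I_n -> R) e :
  (1 <= m)%N -> (m <= #|[set i | r i == e]|)%N -> \sum_i r i = 0 ->
  \sum_i r i ^+ 2 <= n%:R * (n%:R - 1) ->
  e ^+ 2 <= (n.-1)%:R * (n%:R - m%:R) / m%:R.
Proof.
set A := [set i | r i == e] => m1 mk s0 qS.
have kn : (#|A| <= n)%N by apply: leq_trans (max_card _) _; rewrite card_ord.
have cB : #|~: A| = (n - #|A|)%N by rewrite cardsCs card_ord setCK.
have sA : \sum_(i in A) r i = #|A|%:R * e.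
  rewrite (eq_bigr (fun=> e)); last by move=> i; rewrite inE => /eqP.
  by rewrite sumr_const mulr_natl.
have qA : \sum_(i in A) r i ^+ 2 = #|A|%:R * e ^+ 2.
  rewrite (eq_bigr (fun=> e ^+ 2)); last by move=> i; rewrite inE => /eqP ->.
  by rewrite sumr_const mulr_natl.
have split (F : 'I_n -> R) : \sum_i F i = \sum_(i in A) F i + \sum_(i in ~: A) F i.
  rewrite (bigID (mem A)) /=; congr (_ + _); apply: eq_bigl => i; by rewrite ?inE.
have := @cs _ _ (~: A) r.
rewrite cB natrB //.
move: s0 qS; rewrite !split sA qA => s0 qS.
have -> : \sum_(i in ~: A) r i = - (#|A|%:R * e) by apply/eqP; rewrite -addr_eq0 addrC s0.
set N := n%:R; set K := #|A|%:R; set Q := \sum_(i in ~: A) r i ^+ 2.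
have K1 : 1 <= K by rewrite ler1n; apply: leq_trans mk.
have MK : m%:R <= K :> R by rewrite ler_nat.
have M1 : 1 <= m%:R :> R by rewrite ler1n.
have KN : K <= N by rewrite ler_nat.
move=> cs1.
have qS' : Q <= N * (N - 1) - K * e ^+ 2.
  rewrite lerBrDl; exact: qS.
have hq : (N - K) * Q <= (N - K) * (N * (N - 1) - K * e ^+ 2).
  by apply: ler_wpM2l => //; rewrite subr_ge0.
have h1 : N * (K * e ^+ 2) <= N * ((N - K) * (N - 1)).
  have : (- (K * e)) ^+ 2 = K * (K * e ^+ 2) by ring.
  nra.
have h2 : K * e ^+ 2 <= (N - K) * (N - 1).
  by rewrite ler_pM2l in h1 => //; lra.
have n1 : (n.-1)%:R = N - 1.
  by rewrite -subn1 natrB // (leq_trans _ kn) //; apply: leq_trans mk.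
rewrite n1 ler_pdivlMr; last by lra.
have h3 : K * (m%:R * e ^+ 2) <= K * ((N - 1) * (N - m%:R)).
  have a1 : m%:R * (K * e ^+ 2) <= m%:R * ((N - K) * (N - 1)).
    by apply: ler_wpM2l => //; lra.
  have a2 : m%:R * (N - K) <= K * (N - m%:R).
    have : m%:R * N <= K * N by apply: ler_wpM2r => //; lra.
    lra.
  have a3 : (m%:R * (N - K)) * (N - 1) <= (K * (N - m%:R)) * (N - 1).
    by apply: ler_wpM2r => //; lra.
  lra.
by rewrite ler_pM2l in h3 => //; lra.
Qed.


Theorem lemma2p3 (R : realType) (n m : nat) (M : 'M[R]_n) (e : R) :
  M^T = M -> signed_adj M -> (1 <= m)%N -> eig_mult_ge M e m ->
  e ^+ 2 <= (n.-1)%:R * (n%:R - m%:R) / m%:R.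
Proof.
move=> Msym [Mdiag Moff] m1 dv.
have [r [cp sr sq]] := @spec _ _ _ Msym.
have mk : (m <= #|[set i | r i == e]|)%N.
  have := @mult_count _ n (fun i => real_complex R (r i)) (real_complex R e) m.
  rewrite -cp.
  have -> : ('X - (real_complex R e)%:P) ^+ m = map_poly (real_complex R) (('X - e%:P) ^+ m).
    by rewrite rmorphXn rmorphB /= map_polyX map_polyC.
  rewrite dvdp_map => /(_ dv) H.
  apply: leq_trans H _; apply: eq_leq; apply: eq_card => i.
  by rewrite !inE (inj_eq (@complexI _)).
apply: (@final _ _ _ _ _ m1 mk).
- by rewrite sr /mxtrace big1.
- rewrite sq /mxtrace.
  have -> : \sum_i (M *m M) i i = \sum_(i < n) \sum_(j < n) M i j ^+ 2.
    apply: eq_bigr => i _; rewrite mxE; apply: eq_bigr => j _.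
    by rewrite expr2 -{2}Msym mxE.
  have -> : n%:R * (n%:R - 1) = \sum_(i < n) (n%:R - 1 : R).
    by rewrite sumr_const card_ord mulr_natl.
  apply: ler_sum => i _.
  rewrite (bigD1 i) //= Mdiag expr0n add0r.
  have -> : (n%:R - 1 : R) = \sum_(j < n | j != i) 1.
    rewrite sumr_const cardC1 card_ord.
    have n0 : (0 < n)%N by apply: leq_ltn_trans (ltn_ord i).
    by rewrite -[in LHS](prednK n0) -natr1 addrK.
  apply: ler_sum => j ji.
  by case: (Moff i j ltac:(by rewrite eq_sym)) => [->|[->|->]]; rewrite ?expr0n ?expr1n ?sqrrN ?expr1n.
Qed.
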